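(* Let $N=[n]$, let $v:2^N\to\mathbb{R}_+$ be any monotone valuation with $v(\emptyset)=0$, and let $X$ be a maximal decision map for $v$. Let $p\in\mathbb{R}^n_+$, $S=X(p)$ and $\epsilon>0$, and define $p^\epsilon$ by $p^\epsilon_i=\max\{p_i-\frac{\epsilon}{n},0\}$ for $i\in S$ and $p^\epsilon_i=p_i$ for $i\notin S$. Then for any decision map $X'$ for $v$, the set $S^\epsilon=X'(p^\epsilon)$ satisfies $S\cap\{j:p_j>0\}\subseteq S^\epsilon\subseteq S$.
   Context: For $p\in\mathbb{R}^n_+$, $p(S)=\sum_{j\in S}p_j$ and $D(v;p)=\arg\max_{S\subseteq N}(v(S)-p(S))$. A decision map is $X:\mathbb{R}^n_+\to2^N$ with $X(p)\in D(v;p)$ for all $p$; it is maximal if for every $p$ there is no $S'\in D(v;p)$ with $X(p)\subsetneq S'$. The map $X'$ need not be maximal. *)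

(* Defs.v *)
From HB Require Import structures.
From mathcomp Require Import all_boot all_order all_algebra.
Set Implicit Arguments. Unset Strict Implicit. Unset Printing Implicit Defensive.
Import Order.TTheory GRing.Theory Num.Theory.
Local Open Scope ring_scope.

Section Defs.
Variables (R : realFieldType) (n : nat).

Definition nonneg_price (p : 'I_n -> R) : Prop := forall i, 0 <= p i.

Definition price_of (p : 'I_n -> R) (S : {set 'I_n}) : R := \sum_(j in S) p j.

Definition monotone_valuation (v : {set 'I_n} -> R) : Prop :=
  [/\ forall S : {set 'I_n}, 0 <= v S, v set0 = 0 & forall S T : {set 'I_n}, S \subset T -> v S <= v T].

Definition in_demand (v : {set 'I_n} -> R) (p : 'I_n -> R) (S : {set 'I_n}) : Prop :=
  forall T : {set 'I_n}, v T - price_of p T <= v S - price_of p S.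

Definition decision_map (v : {set 'I_n} -> R) (X : ('I_n -> R) -> {set 'I_n}) : Prop :=
  forall p, nonneg_price p -> in_demand v p (X p).

Definition maximal_decision_map (v : {set 'I_n} -> R) (X : ('I_n -> R) -> {set 'I_n}) : Prop :=
  decision_map v X /\
  forall p, nonneg_price p -> forall S', in_demand v p S' -> ~ (X p \proper S').

Definition perturb (p : 'I_n -> R) (S : {set 'I_n}) (eps : R) : 'I_n -> R :=
  fun i => if i \in S then Num.max (p i - eps / n%:R) 0 else p i.

End Defs.

(* Main.v *)
Require Import Defs.
From HB Require Import structures.
From mathcomp Require Import all_boot all_order all_algebra.
From mathcomp Require Import lra.
Import Order.TTheory GRing.Theory Num.Theory.
Local Open Scope ring_scope.

Lemma price_mk (R : realFieldType) n (p : 'I_n -> R) (S : {set 'I_n}) :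
  price_of p S = \sum_i (if i \in S then p i else 0).
Proof. by rewrite /price_of big_mkcond. Qed.

Theorem mainTheorem18 (R : realFieldType) (n : nat)
  (v : {set 'I_n} -> R) (X X' : ('I_n -> R) -> {set 'I_n})
  (p : 'I_n -> R) (eps : R) :
  monotone_valuation v ->
  maximal_decision_map v X ->
  decision_map v X' ->
  nonneg_price p ->
  0 < eps ->
  [set j in X p | 0 < p j] \subset X' (perturb p (X p) eps) /\
  X' (perturb p (X p) eps) \subset X p.
Proof.
move=> [v0 _ vmon] [dmX maxX] dmX' hp heps.
set S := X p; set q := perturb p S eps; set S' := X' q.
set e := eps / n%:R.
have he : 0 <= e by rewrite divr_ge0 // ?ltW.
have hq : nonneg_price q.
  move=> i; rewrite /q /perturb; case: ifP => _; last exact: hp.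
  by rewrite le_max lexx orbT.
set d := fun i => p i - q i.
have hd0 : forall i, i \notin S -> d i = 0.
  by move=> i hi; rewrite /d /q /perturb (negbTE hi) subrr.
have hd : forall i, 0 <= d i.
  move=> i; rewrite /d /q /perturb subr_ge0; case: ifP => _; last exact: lexx.
  by rewrite ge_max hp andbT lerBlDr lerDl.
have hdp : forall i, i \in S -> 0 < p i -> 0 < d i.
  move=> i hi hpi; rewrite /d /q /perturb hi subr_gt0 gt_max hpi andbT.
  have hn : (0 < n)%N by apply: leq_ltn_trans (ltn_ord i).
  have : 0 < e by rewrite divr_gt0 // ltr0n.
  move=> he'; rewrite -/e; lra.
set D := fun T : {set 'I_n} => \sum_i (if i \in T then d i else 0).
have hpq : forall T, price_of q T = price_of p T - D T.
  move=> T; rewrite !price_mk /D -sumrB; apply: eq_bigr => i _.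
  by case: ifP => _; rewrite /d; lra.
have hDS : D S' <= D S.
  apply: ler_sum => i _; case: (boolP (i \in S)) => hi; case: ifP => _ //.
  by rewrite hd0.
have H1 := dmX' q hq S.
have H2 := dmX p hp S'.
rewrite /in_demand !hpq in H1.
have hdem' : in_demand v p S'.
  move=> T; have := dmX p hp T; lra.
have part2 : [set j in S | 0 < p j] \subset S'.
  apply/subsetP => j; rewrite inE => /andP [hjS hpj].
  apply/negPn/negP => hjS'.
  have hDj : D S' + d j <= D S.
    have -> : d j = \sum_i (if i == j then d i else 0).
      by rewrite -big_mkcond big_pred1_eq.
    rewrite -big_split; apply: ler_sum => i _ /=.
    case: (boolP (i == j)) => [/eqP -> | hij].
      by rewrite (negbTE hjS') hjS add0r.
    rewrite addr0; case: (boolP (i \in S)) => hi; case: ifP => _ //.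
    by rewrite hd0.
  have := hdp j hjS hpj; lra.
split; first exact: part2.
apply/subsetP => i hiS'; apply/negPn/negP => hiS.
apply: (maxX p hp (S :|: S')).
  move=> T; have := hdem' T.
  have hv := vmon _ _ (subsetUr S S').
  have hpU : price_of p (S :|: S') <= price_of p S'.
    rewrite !price_mk; apply: ler_sum => k _; rewrite inE.
    case: (boolP (k \in S')) => hk; rewrite ?orbT ?orbF //.
    case: ifP => hkS //.
    have : ~~ (0 < p k).
      apply/negP => hpk; move/subsetP: part2 => /(_ k); rewrite inE hkS hpk.
      by rewrite (negbTE hk) => /(_ isT).
    by rewrite -leNgt.
  move=> hT; have := H2; lra.
rewrite properE subsetUl /=; apply/negP => /subsetP /(_ i).
by rewrite inE hiS' orbT (negbTE hiS) => /(_ isT).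
Qed.
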